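(* Let $G=(V,E)$ be an undirected unweighted graph on $n$ nodes and let $H$ be the subgraph produced by the construction described in the context. For any two nodes $s,t\in V$ that are uncovered in $H$ and such that the canonical shortest path $\pi_G(s,t)$ has more than $\mu^3/n$ heavy nodes, we have $\texttt{dist}_H(s,t)\le\texttt{dist}_G(s,t)+4$ with probability at least $1-\frac{1}{n^3}$.
   Context: Let $\mu=\lceil n^{2/5}\log^{1/5}n\rceil$. A node is heavy if its degree in $G$ is at least $\mu$, and light otherwise; an edge is heavy if at least one endpoint is heavy. $\Gamma_G(v)$ denotes the set consisting of $v$ and its neighbors; for nodes $u,v$, $\pi_G(u,v)$ is a fixed (canonical) shortest $u\leadsto v$ path, $|P|$ is the number of edges of a path $P$, and $\circ$ is path concatenation. A node is uncovered in $H$ if not all of its incident edges in $G$ belong to $H$. Weak CSSSP: given $G$, gray edges $E_g\subseteq E$, source $s$, positive integer $g$, an $s\leadsto t$ path is $g$-short if it has fewer than $g$ gray edges and has the form $(s,s')\circ\pi_G(s',t')\circ(t',t)$ with $\pi_G(s',t')$ a shortest path and $(s,s'),(t',t)$ edges (or empty when $s'=s$, resp. $t'=t$). A solution outputs, for every $t$, an $s\leadsto t$ path $P(s,t)$ such that whenever an $s\leadsto t$ $g$-short path exists, $P(s,t)$ has at most $5g$ gray edges and $|P(s,t)|\le|P_g(s,t)|$ for every $s\leadsto t$ path $P_g(s,t)$ with fewer than $g$ gray edges (otherwise $P(s,t)$ is arbitrary). Construction of $H=(V,E')$: (1) $E'$ := all edges incident to light nodes. (2) Sample a set $S_1$ by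 including each node independently with probability $9\mu/n$; for each $x\in S_1$ add to $E'$ the edges of a BFS tree rooted at $x$ spanning $V$. (3) Sample a set $S_2$ by including each node independently with probability $1/\mu$; for each heavy node $x$ with $(\{x\}\cup\Gamma_G(x))\cap S_2=\varnothing$, add all edges incident to $x$ to $E'$. (4) For each heavy node $v\notin S_2$ with $\Gamma_G(v)\cap S_2\neq\varnothing$, choose arbitrarily one $x\in\Gamma_G(v)\cap S_2$ and add $(x,v)$ to $E'$. (5) For each $x_1\in S_2$, solve weak CSSSP on $G$ with source $x_1$, gray edges the heavy edges, and $g=\mu^3/n+2$, obtaining paths $P(x_1,x_2)$ for all $x_2\in V$; add the edges of $P(x_1,x_2)$ to $E'$ for every $x_2\in S_2$. The probability is over the random samples $S_1,S_2$. *)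

(* Defs.v *)
From Stdlib Require Import Reals.
From mathcomp Require Import all_boot.
Set Implicit Arguments. Unset Strict Implicit. Unset Printing Implicit Defensive.
Global Open Scope R_scope.

Section Defs.
Variable T : finType.
Variable adj : rel T.

Definition rpow (x y : R) : R := if Rle_dec x 0 then R0 else Rpower x y.

(* mu = ceil(n^{2/5} (ln n)^{1/5}); ceil x = - floor (- x) *)
Definition mu_real (n : nat) : R :=
  (rpow (INR n) (2/5) * rpow (ln (INR n)) (1/5)).
Definition mu (n : nat) : nat := Z.to_nat (- Int_part (- mu_real n))%Z.

Definition deg (v : T) : nat := #|[set u | adj v u]|.
Definition heavy (v : T) : bool := (mu #|T| <= deg v)%N.

Definition Gamma (v : T) : {set T} := [set u | (u == v) || adj v u].

Definition gray (u v : T) : bool := adj u v && (heavy u || heavy v).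

(* A walk from s is the list p of the vertices after s; it is an s~>t path in
   the graph r if consecutive vertices are adjacent and it ends at t.  Its
   number of edges is size p. *)
Definition is_path (r : rel T) (s : T) (p : seq T) (t : T) : bool :=
  path r s p && (last s p == t).

Definition ngray (s : T) (p : seq T) : nat :=
  count (fun e => gray e.1 e.2) (zip (s :: p) p).

Fixpoint within (r : rel T) (k : nat) (u v : T) : bool :=
  if k is k'.+1 then within r k' u v || [exists w, within r k' u w && r w v]
  else u == v.

(* dist_r(u,v) (equal to #|T| if v is unreachable from u) *)
Definition gdist (r : rel T) (u v : T) : nat :=
  find (fun k => within r k u v) (iota 0 #|T|).

Definition shortest_paths (pi : T -> T -> seq T) : Prop :=
  forall u v, is_path adj u (pi u v) v /\ size (pi u v) = gdist adj u v.

Definition g_short (pi : T -> T -> seq T) (g : R) (s t : T) (P : seq T) : Prop :=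
  is_path adj s P t /\ (INR (ngray s P) < g) /\
  exists s' t', (s' = s \/ adj s s') /\ (t' = t \/ adj t' t) /\
    P = (if s' == s then [::] else [:: s']) ++ pi s' t' ++
        (if t' == t then [::] else [:: t]).

(* P : T -> seq T (P t = P(x1,t)) solves weak CSSSP from source x1 *)
Definition weak_csssp (pi : T -> T -> seq T) (g : R) (x1 : T)
    (P : T -> seq T) : Prop :=
  forall t, is_path adj x1 (P t) t /\
    ((exists Q, g_short pi g x1 t Q) ->
       (INR (ngray x1 (P t)) <= 5 * g) /\
       forall Q, is_path adj x1 Q t -> (INR (ngray x1 Q) < g) ->
         (size (P t) <= size Q)%N).

Definition gpar : R := INR (mu #|T|) ^ 3 / INR #|T| + 2.

(* par x is a BFS tree rooted at x: par x v is the parent of v <> x *)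
Definition bfs_parents (par : T -> T -> T) : Prop :=
  forall x v, v != x -> adj (par x v) v /\ ((gdist adj x (par x v)).+1 = gdist adj x v)%N.

Definition walk_edge (s : T) (p : seq T) (u v : T) : bool :=
  ((u, v) \in zip (s :: p) p) || ((v, u) \in zip (s :: p) p).

Section H.
Variables (par : T -> T -> T) (chooser : {set T} -> T -> T)
          (Psol : T -> T -> seq T) (S1 S2 : {set T}).

Definition step3 (x : T) : bool := heavy x && [disjoint Gamma x & S2].
Definition step4 (v x : T) : bool :=
  [&& heavy v, v \notin S2, Gamma v :&: S2 != set0 & chooser S2 v == x].

Definition Hadj (u v : T) : bool :=
  adj u v &&
  [|| ~~ heavy u, ~~ heavy v,
      [exists x in S1, ((v != x) && (par x v == u))
                       || ((u != x) && (par x u == v))],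
      step3 u, step3 v,
      step4 u v, step4 v u
    | [exists x1 in S2, exists x2 in S2, walk_edge x1 (Psol x1 x2) u v]].
End H.

Definition uncovered (h : rel T) (v : T) : bool :=
  [exists u, adj v u && ~~ h v u].

(* probability of sampling exactly S when each node is taken independently
   with probability p *)
Definition weight (p : R) (S : {set T}) : R :=
  (\big[Rmult/R1]_(v in S) p * \big[Rmult/R1]_(v in ~: S) (1 - p)).

Definition p1 : R := Rmin 1 (9 * INR (mu #|T|) / INR #|T|).
Definition p2 : R := Rmin 1 (/ INR (mu #|T|)).

End Defs.

(* Main.v *)
Require Import Defs.
From Stdlib Require Import Reals Lra ZArith.
From mathcomp Require Import all_boot zify.
From HB Require Import structures.
Set Implicit Arguments. Unset Strict Implicit. Unset Printing Implicit Defensive.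
Open Scope R_scope.

Lemma Rplus_assoc' : associative Rplus. Proof. by move=> x y z; rewrite Rplus_assoc. Qed.
Lemma Rmult_assoc' : associative Rmult. Proof. by move=> x y z; rewrite Rmult_assoc. Qed.
HB.instance Definition _ := Monoid.isComLaw.Build R R0 Rplus Rplus_assoc' Rplus_comm Rplus_0_l.
HB.instance Definition _ := Monoid.isComLaw.Build R R1 Rmult Rmult_assoc' Rmult_comm Rmult_1_l.
HB.instance Definition _ := Monoid.isMulLaw.Build R R0 Rmult Rmult_0_l Rmult_0_r.
HB.instance Definition _ := Monoid.isAddLaw.Build R Rmult Rplus Rmult_plus_distr_r Rmult_plus_distr_l.

Lemma prod_split (T : finType) (J : {set T}) (F G : T -> R) :
  \big[Rmult/R1]_i (if i \in J then F i else G i) =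
  \big[Rmult/R1]_(i in J) F i * \big[Rmult/R1]_(i in ~: J) G i.
Proof.
rewrite (bigID (mem J)) /=; congr (_ * _); apply: eq_big => i //=.
- by move=> ->.
- by rewrite in_setC.
- by move/negbTE ->.
Qed.

Lemma prod_const (T : finType) (A : {set T}) c :
  \big[Rmult/R1]_(i in A) c = c ^ #|A|.
Proof. rewrite big_const; elim: #|A| => //= n ->; by []. Qed.

Lemma weight_sum (T : finType) p :
  \big[Rplus/R0]_(S : {set T}) weight p S = 1.
Proof.
have := @bigA_distr R R0 R1 Rmult Rplus T (fun _ : T => p) (fun _ => 1 - p).
rewrite big1; last by move=> i _; rewrite /= Rplus_minus.
move=> E; transitivity R1; last by []. rewrite E; apply: eq_bigr => J _; by rewrite prod_split.
Qed.

Lemma weight_miss (T : finType) p (U : {set T}) :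
  \big[Rplus/R0]_(S : {set T} | [disjoint S & U]) weight p S = (1 - p) ^ #|U|.
Proof.
have := @bigA_distr R R0 R1 Rmult Rplus T (fun i : T => if i \in U then 0 else p) (fun _ => 1 - p).
have -> : \big[Rmult/R1]_i ((if i \in U then 0 else p) + (1 - p)) =
          \big[Rmult/R1]_(i in U) (1 - p).
  rewrite (bigID (mem U)) /= [X in _ * X]big1; last first.
    by move=> i /negbTE ->; ring.
  rewrite Rmult_1_r; apply: eq_bigr => i ->; ring.
rewrite prod_const => ->; rewrite big_mkcond; apply: eq_bigr => J _.
rewrite prod_split /weight.
case: ifP => [dis|ndis].
  congr (_ * _); apply: eq_bigr => i iJ.
  by move/disjointFr: dis => /(_ _ iJ) ->.
case/pred0Pn: (negbT ndis) => i /andP[iJ iU].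
rewrite (bigD1 i) //=; have -> : i \in U by []. by rewrite !Rmult_0_l.
Qed.

Lemma sum_le (I : Type) (r : seq I) (P : pred I) (F G : I -> R) :
  (forall i, P i -> F i <= G i) ->
  \big[Rplus/R0]_(i <- r | P i) F i <= \big[Rplus/R0]_(i <- r | P i) G i.
Proof.
move=> H; apply: (big_ind2 (fun x y => x <= y)) => //; [lra | move=> *; lra].
Qed.

Lemma weight_ge0 (T : finType) p (S : {set T}) : 0 <= p <= 1 -> 0 <= weight p S.
Proof.
move=> hp; rewrite /weight; apply: Rmult_le_pos;
  apply: (big_ind (fun x => 0 <= x)) => //; try lra; try (move=> *; nra).
Qed.

Lemma sum_lb (T : finType) (P : {set T} -> {set T} -> bool) (U : {set T}) p1 p2 :
  0 <= p1 <= 1 -> 0 <= p2 <= 1 ->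
  (forall S1 S2 : {set T}, ~~ [disjoint S1 & U] -> P S1 S2) ->
  \big[Rplus/R0]_(S1 : {set T}) \big[Rplus/R0]_(S2 : {set T} | P S1 S2)
     (weight p1 S1 * weight p2 S2) >= 1 - (1 - p1) ^ #|U|.
Proof.
move=> h1 h2 HP.
have E : \big[Rplus/R0]_(S1 : {set T}) (if [disjoint S1 & U] then 0 else weight p1 S1)
         = 1 - (1 - p1) ^ #|U|.
  rewrite -(weight_miss p1 U) -{1}(weight_sum T p1).
  rewrite [in X in _ = X - _](bigID (fun S : {set T} => [disjoint S & U])) /=.
  suff -> : \big[Rplus/R0]_(S1 : {set T}) (if [disjoint S1 & U] then 0 else weight p1 S1) =
     \big[Rplus/R0]_(S : {set T} | ~~ [disjoint S & U]) weight p1 S.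
    by rewrite Rplus_comm /Rminus Rplus_assoc Rplus_opp_r Rplus_0_r.
  rewrite [RHS]big_mkcond /=; apply: eq_bigr => S _; case: ifP => //.
apply: Rle_ge; rewrite -E; apply: sum_le => S1 _.
case: ifP => hd.
  apply: (big_ind (fun x => 0 <= x)) => //; try lra; try (move=> *; lra).
  move=> S2 _; apply: Rmult_le_pos; exact: weight_ge0.
rewrite (eq_bigl (fun _ => true)); last by move=> S2; rewrite HP // hd.
rewrite -big_distrr /= weight_sum; lra.
Qed.

Lemma mu_real_pos (n : nat) : (2 <= n)%N -> 0 < mu_real n.
Proof.
move=> hn; have h1 : 1 < INR n by apply: lt_1_INR; apply/ltP.
have h0 : 0 < ln (INR n) by rewrite -ln_1; apply: ln_increasing; lra.
rewrite /mu_real /rpow.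
case: Rle_dec => ?; first lra.
case: Rle_dec => ?; first lra.
apply: Rmult_lt_0_compat; exact: exp_pos.
Qed.

Lemma mu_real_pow5 (n : nat) : (2 <= n)%N -> mu_real n ^ 5 = INR n ^ 2 * ln (INR n).
Proof.
move=> hn; have h1 : 1 < INR n by apply: lt_1_INR; apply/ltP.
have h0 : 0 < ln (INR n) by rewrite -ln_1; apply: ln_increasing; lra.
rewrite /mu_real /rpow.
case: Rle_dec => ?; first lra.
case: Rle_dec => ?; first lra.
rewrite Rpow_mult_distr.
have E : forall x y, 0 < x -> Rpower x y ^ 5 = Rpower x (y * 5).
  move=> x y hx; rewrite -Rpower_pow; last exact: exp_pos.
  rewrite Rpower_mult; congr Rpower; simpl; ring.
rewrite !E; try lra.
have -> : 2 / 5 * 5 = INR 2 by simpl; field.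
have -> : 1 / 5 * 5 = 1 by field.
rewrite Rpower_pow ?Rpower_1; lra.
Qed.

Lemma mu_ge (n : nat) : (2 <= n)%N -> mu_real n <= INR (mu n).
Proof.
move=> hn; have hp := mu_real_pos hn.
rewrite /mu /Int_part.
set m := mu_real n.
have [a1 a2] := archimed (- m).
set z := (- (up (- m) - 1))%Z.
have hz : m <= IZR z by rewrite /z opp_IZR minus_IZR; lra.
have z0 : (0 <= z)%Z.
  apply: le_IZR; move: hz; generalize (IZR z) => x; rewrite -/m in hp; lra.
by rewrite INR_IZR_INZ Z2Nat.id.
Qed.

Lemma exp_pow_m (a : R) (m : nat) : exp a ^ m = exp (a * INR m).
Proof.
elim: m => [|m IH]; first by rewrite /= Rmult_0_r exp_0.
by rewrite -tech_pow_Rmult IH -exp_plus S_INR; congr exp; ring.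
Qed.

Lemma tail_bound (n k m : nat) :
  (1 <= n)%N -> INR k > INR (mu n) ^ 3 / INR n -> (k * mu n <= 3 * m)%N ->
  (1 - Rmin 1 (9 * INR (mu n) / INR n)) ^ m <= / INR n ^ 3.
Proof.
move=> hn hk hkm.
set M := INR (mu n); set N := INR n.
rewrite -/M -/N in hk.
have N1 : 1 <= N by rewrite /N -INR_1; apply: le_INR; apply/leP.
have M0 : 0 <= M by apply: pos_INR.
have q0 : 0 <= 9 * M / N by apply: Rmult_le_pos; [lra | left; apply: Rinv_0_lt_compat; lra].
set p := Rmin 1 (9 * M / N).
have p01 : 0 <= p <= 1.
  rewrite /p; split; [apply: Rmin_glb; lra | apply: Rmin_l].
case: (ltnP n 2) => hn2.
  have Neq : N = 1 by rewrite /N; have -> : n = 1%N by apply/eqP; rewrite eqn_leq hn andbT -ltnS.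
  have -> : / N ^ 3 = 1 by rewrite Neq pow1 Rinv_1.
  rewrite -[X in _ <= X](pow1 m); apply: pow_incr; lra.
have hmr := mu_ge hn2; have hmp := mu_real_pos hn2; have h5 := mu_real_pow5 hn2.
rewrite -/M -/N in hmr h5.
have N2 : 2 <= N by rewrite /N; change 2 with (INR 2); apply: le_INR; apply/leP.
have lnN : 0 < ln N by rewrite -ln_1; apply: ln_increasing; lra.
have Mpos : 0 < M by lra.
have kpos : 0 < INR k.
  apply: (Rlt_trans _ _ _ _ hk); apply: Rmult_lt_0_compat; [apply: pow_lt; lra | apply: Rinv_0_lt_compat; lra].
have hKM : INR k * M <= 3 * INR m.
  rewrite /M -mult_INR; rewrite (_ : 3 = INR 3); last by simpl; ring. rewrite -mult_INR; apply: le_INR; apply/leP; exact: hkm.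
have N3 : 0 < / N ^ 3 by apply: Rinv_0_lt_compat; apply: pow_lt; lra.
case: (Rle_lt_dec 1 (9 * M / N)) => hq.
  rewrite /p Rmin_left // Rminus_diag.
  have m1 : (0 < m)%N.
    rewrite lt0n; apply/eqP => m0; move: hKM; rewrite m0 /= Rmult_0_r => h.
    have : 0 < INR k * M by apply: Rmult_lt_0_compat. lra.
  rewrite pow_i; [lra | by apply/ltP].
rewrite /p Rmin_right; last lra.
have [q qdef] : exists q, q = 9 * M / N by eexists.
rewrite -qdef; rewrite -qdef in hq q0.
apply: Rle_trans (_ : exp (- q) ^ m <= _).
  apply: pow_incr; split; first lra.
  have := exp_ineq1_le (- q); lra.
rewrite exp_pow_m.
have key : 3 * ln N <= q * INR m.
  have e1 : q * INR m >= q * (INR k * M / 3) by apply: Rle_ge; apply: Rmult_le_compat_l; lra.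
  have e2 : INR k * M ^ 2 / N > M ^ 3 / N * M ^ 2 / N.
    have c : 0 < M ^ 2 / N by apply: Rmult_lt_0_compat; [apply: pow_lt; lra | apply: Rinv_0_lt_compat; lra].
    have -> : INR k * M ^ 2 / N = INR k * (M ^ 2 / N) by field; lra.
    have -> : M ^ 3 / N * M ^ 2 / N = (M ^ 3 / N) * (M ^ 2 / N) by field; lra.
    by apply: Rmult_lt_compat_r.
  have e3 : M ^ 3 / N * M ^ 2 / N = M ^ 5 / N ^ 2 by field; lra.
  have e4 : mu_real n ^ 5 <= M ^ 5 by apply: pow_incr; lra.
  have e5 : M ^ 5 / N ^ 2 >= ln N.
    apply: Rle_ge; apply: (Rmult_le_reg_r (N ^ 2)); first by apply: pow_lt; lra.
    have -> : M ^ 5 / N ^ 2 * N ^ 2 = M ^ 5 by field; lra.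
    lra.
  have e6 : q * (INR k * M / 3) = 3 * (INR k * M ^ 2 / N) by rewrite qdef; field; lra.
  lra.
have -> : / N ^ 3 = exp (- (3 * ln N)).
  rewrite exp_Ropp; congr Rinv.
  rewrite -Rpower_pow; last lra.
  by rewrite /Rpower; congr exp; simpl; ring.
rewrite Ropp_mult_distr_l_reverse.
case: (Req_dec (q * INR m) (3 * ln N)) => [->|ne]; first lra.
left; apply: exp_increasing; lra.
Qed.
Open Scope nat_scope.

Lemma withinP (T : finType) (r : rel T) k u v :
  reflect (exists p, [/\ path r u p, last u p = v & size p <= k]) (within r k u v).
Proof.
elim: k v => [|k IH] v /=.
  apply: (iffP eqP) => [->|[p [_ <-]]]; first by exists [::].
  by case: p.
apply: (iffP orP) => [[/IH [p [h1 h2 h3]]|/existsP [w /andP [/IH [p [h1 h2 h3]] hw]]]|].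
- by exists p; split => //; apply: leqW.
- exists (rcons p v); rewrite rcons_path last_rcons size_rcons h1 h2 hw; split => //.
- case=> p [h1 h2 h3]; case: (leqP (size p) k) => hk.
    by left; apply/IH; exists p.
  right; apply/existsP; case/lastP: p h1 h2 h3 hk => [//|p x].
  rewrite rcons_path last_rcons size_rcons ltnS => /andP [hp hx] ex h3' hk.
  exists (last u p); rewrite -ex hx andbT; apply/IH; exists p; split => //.
Qed.

Lemma within_mono (T : finType) (r : rel T) k k' u v :
  k <= k' -> within r k u v -> within r k' u v.
Proof.
move=> hk /withinP [p [h1 h2 h3]]; apply/withinP; exists p; split => //.
exact: leq_trans hk.
Qed.

Lemma within_cat (T : finType) (r : rel T) a b u w v :
  within r a u w -> within r b w v -> within r (a + b) u v.
Proof.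
move=> /withinP [p [h1 h2 h3]] /withinP [q [g1 g2 g3]]; apply/withinP.
exists (p ++ q); rewrite cat_path last_cat h2 h1 g1 g2 size_cat; split => //.
exact: leq_add.
Qed.

Lemma within_sym (T : finType) (r : rel T) k u v :
  symmetric r -> within r k u v -> within r k v u.
Proof.
move=> sr /withinP [p [h1 h2 h3]]; apply/withinP.
exists (rev (belast u p)); split.
- rewrite -h2 rev_path; rewrite (@eq_path _ _ r) //; move=> x y /=; exact: sr.
- by rewrite -h2 -(last_cons u) -rev_rcons -lastI rev_cons last_rcons.
- by rewrite size_rev size_belast.
Qed.

Lemma within_edge (T : finType) (r : rel T) u v : r u v -> within r 1 u v.
Proof. by move=> h; apply/withinP; exists [:: v]; rewrite /= h. Qed.

Lemma within0 (T : finType) (r : rel T) u : within r 0 u u.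
Proof. by rewrite /= eqxx. Qed.

Lemma gdist_le (T : finType) (r : rel T) k u v :
  within r k u v -> gdist r u v <= k.
Proof.
move=> h; rewrite /gdist; case: (leqP #|T| k) => hk.
  by apply: leq_trans (find_size _ _) _; rewrite size_iota.
rewrite leqNgt; apply/negP => /(before_find 0).
by rewrite nth_iota // add0n h.
Qed.

Lemma last_take_nth (T : Type) (s : T) ps i :
  i <= size ps -> last s (take i ps) = nth s (s :: ps) i.
Proof.
move=> hi; rewrite (last_nth s) size_take.
case: (ltnP i (size ps)) => h; last first.
  have -> : i = size ps by apply/eqP; rewrite eqn_leq hi h.
  by rewrite take_size.
case: i hi h => //= j _ h; rewrite nth_take //.
Qed.

Lemma prefix_within (T : finType) (r : rel T) s ps i :
  path r s ps -> i <= size ps -> within r i s (nth s (s :: ps) i).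
Proof.
move=> hp hi; apply/withinP; exists (take i ps); split.
- exact: take_path.
- exact: last_take_nth.
- by rewrite size_take; case: ltnP.
Qed.

Lemma suffix_within (T : finType) (r : rel T) s ps i :
  path r s ps -> i <= size ps -> within r (size ps - i) (nth s (s :: ps) i) (last s ps).
Proof.
move=> hp hi; apply/withinP; exists (drop i ps); split.
- move: hp; rewrite -{1}(cat_take_drop i ps) cat_path => /andP [_].
  by rewrite last_take_nth.
- by rewrite -last_take_nth // -last_cat cat_take_drop.
- by rewrite size_drop.
Qed.

Lemma shortcut (T : finType) (r : rel T) s ps i j m :
  path r s ps -> size ps = gdist r s (last s ps) ->
  i <= j -> j <= size ps ->
  within r m (nth s (s :: ps) i) (nth s (s :: ps) j) -> j - i <= m.
Proof.
move=> hp hd hij hj hw.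
have h1 := prefix_within hp (leq_trans hij hj).
have h2 := suffix_within hp hj.
have := gdist_le (within_cat (within_cat h1 hw) h2).
rewrite -hd => h.
have hi : i <= size ps := leq_trans hij hj.
apply: contraLR h; rewrite -!ltnNge => hlt.
rewrite -addnA.
have e : size ps = i + (j - i) + (size ps - j) by rewrite subnKC // subnKC.
by rewrite {2}e -addnA ltn_add2l ltn_add2r.
Qed.

Lemma within_Gamma (T : finType) (adj : rel T) v w :
  w \in Gamma adj v -> within adj 1 v w.
Proof.
rewrite inE => /orP [/eqP ->|h]; last exact: within_edge.
exact: (within_mono (k := 0)) (within0 _ _).
Qed.

Lemma short_uniq (T : finType) (r : rel T) s ps :
  path r s ps -> size ps = gdist r s (last s ps) -> uniq (s :: ps).
Proof.
move=> hp hd; apply/negPn/negP => /(uniqPn s) [i [j [hij hj e]]].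
have := shortcut hp hd (ltnW hij) hj; rewrite e => /(_ 0 (within0 _ _)).
by rewrite leqn0 subn_eq0 leqNgt hij.
Qed.

Lemma idx_close (T : finType) (adj : rel T) (adj_sym : symmetric adj) s ps v1 v2 w :
  path adj s ps -> size ps = gdist adj s (last s ps) ->
  v1 \in s :: ps -> v2 \in s :: ps -> w \in Gamma adj v1 -> w \in Gamma adj v2 ->
  index v2 (s :: ps) <= index v1 (s :: ps) + 2.
Proof.
move=> hp hd h1 h2 g1 g2.
case: (leqP (index v2 (s :: ps)) (index v1 (s :: ps))) => hle.
  exact: leq_trans hle (leq_addr _ _).
have w2 : within adj 2 v1 v2.
  exact: (within_cat (within_Gamma g1) (within_sym adj_sym (within_Gamma g2))).
have := @shortcut _ _ s ps (index v1 (s :: ps)) (index v2 (s :: ps)) 2 hp hd (ltnW hle).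
rewrite -ltnS; have -> : (size ps).+1 = size (s :: ps) by [].
rewrite index_mem h2 !nth_index // => /(_ isT w2).
by rewrite leq_subLR addnC.
Qed.

Lemma card_le3 (T : finType) (L : seq T) (A : {set T}) :
  {subset A <= L} ->
  (forall v1 v2, v1 \in A -> v2 \in A -> index v2 L <= index v1 L + 2) ->
  #|A| <= 3.
Proof.
move=> sub close.
case: (set_0Vmem A) => [->|[v0 hv0]]; first by rewrite cards0.
case: (@arg_minnP _ v0 (mem A) (fun v => index v L) hv0) => vm hvm hmin.
pose f (v : T) : 'I_3 := inord (index v L - index vm L).
have fv : forall v, v \in A -> (f v : nat) = index v L - index vm L.
  move=> v hv; rewrite inordK // ltnS leq_subLR; exact: (close vm v).
have inj : {in A &, injective f}.
  move=> v v' hv hv' e.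
  have : index v L - index vm L = index v' L - index vm L by rewrite -fv // -fv // e.
  move/(f_equal (fun x => x + index vm L)); rewrite !subnK ?hmin // => ei.
  by rewrite -(nth_index v (sub _ hv)) ei nth_index //; apply: sub.
rewrite -(card_in_imset inj); apply: leq_trans (max_card _) _; by rewrite card_ord.
Qed.

Lemma card_sub_sum (T : finType) (U B : {set T}) :
  B \subset U -> #|B| = \sum_(w in U) (w \in B).
Proof.
move=> sBU; rewrite -sum1_card.
rewrite (eq_bigl (fun w => (w \in U) && (w \in B))); last first.
  move=> w; case hB: (w \in B); last by rewrite andbF.
  by rewrite (subsetP sBU _ hB).
by rewrite big_mkcondr /=; apply: eq_bigr => w _; case: (w \in B).
Qed.

Lemma count_bound (T : finType) (adj : rel T) (adj_sym : symmetric adj) s ps :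
  path adj s ps -> size ps = gdist adj s (last s ps) ->
  count (heavy adj) (s :: ps) * mu #|T| <=
    3 * #|\bigcup_(v in [set v | (v \in s :: ps) && heavy adj v]) Gamma adj v|.
Proof.
move=> hp hd; set Hv := [set v | _]; set U := \bigcup_(v in Hv) Gamma adj v.
have hu := short_uniq hp hd.
have cH : #|Hv| = count (heavy adj) (s :: ps).
  rewrite -size_filter -(card_uniqP (filter_uniq _ hu)).
  by apply: eq_card => v; rewrite !inE mem_filter andbC.
rewrite -cH -sum_nat_const.
apply: (@leq_trans (\sum_(v in Hv) #|Gamma adj v|)).
  apply: leq_sum => v; rewrite inE => /andP [_ hv].
  apply: leq_trans hv _; apply: subset_leq_card; apply/subsetP => u.
  by rewrite !inE => ->; rewrite orbT.
have sGU : forall v, v \in Hv -> Gamma adj v \subset U.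
  by move=> v hv; apply: (bigcup_sup v hv).
rewrite (eq_bigr (fun v => \sum_(w in U) (w \in Gamma adj v))); last first.
  by move=> v hv; apply: card_sub_sum; apply: sGU.
rewrite exchange_big /= mulnC -sum_nat_const.
apply: leq_sum => w hw.
set B := [set v in Hv | w \in Gamma adj v].
have -> : \sum_(v in Hv) (w \in Gamma adj v) = #|B|.
  rewrite (card_sub_sum (U := Hv)); last by apply/subsetP => v; rewrite inE => /andP[].
  by apply: eq_bigr => v hv; rewrite /B [in RHS]in_set hv.
apply: (@card_le3 _ (s :: ps) B).
  by move=> v; rewrite !inE => /andP [/andP [] ].
move=> v1 v2; rewrite /B !in_set => /andP [/andP [h1 _] g1] /andP [/andP [h2 _] g2].
apply: (idx_close (w := w) adj_sym hp hd h1 h2); by rewrite inE.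
Qed.
Open Scope R_scope.

Lemma Hadj_sym (T : finType) (adj : rel T) (adj_sym : symmetric adj) par chooser Psol S1 S2 :
  symmetric (Hadj adj par chooser Psol S1 S2).
Proof.
move=> u v; rewrite /Hadj adj_sym.
have e1 : [exists x in S1, ((v != x) && (par x v == u)) || ((u != x) && (par x u == v))] =
          [exists x in S1, ((u != x) && (par x u == v)) || ((v != x) && (par x v == u))].
  by apply: eq_existsb => x; rewrite orbC.
have e2 : [exists x1 in S2, exists x2 in S2, walk_edge x1 (Psol x1 x2) u v] =
          [exists x1 in S2, exists x2 in S2, walk_edge x1 (Psol x1 x2) v u].
  apply: eq_existsb => x1; apply: andb_id2l => _; apply: eq_existsb => x2.
  by rewrite /walk_edge orbC.
rewrite e1 e2.
by case: (adj v u); case: (heavy adj u); case: (heavy adj v); case: (step3 adj S2 u);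
  case: (step3 adj S2 v); case: (step4 adj chooser S2 u v); case: (step4 adj chooser S2 v u).
Qed.

Lemma bfs_within (T : finType) (adj : rel T) par chooser Psol (S1 S2 : {set T})
  (Hpar : bfs_parents adj par) x (hx : x \in S1) y :
  within (Hadj adj par chooser Psol S1 S2) (gdist adj x y) x y.
Proof.
move e: (gdist adj x y) => k; elim: k y e => [|k IH] y e.
  case: (eqVneq y x) => [->|ne]; first exact: within0.
  by have [_] := Hpar x y ne; rewrite e.
case: (eqVneq y x) => [->|ne]; first exact: (within_mono (k := 0)) (within0 _ _).
have [ha h] := Hpar x y ne; rewrite e in h; case: h => h.
rewrite -addn1; apply: within_cat (IH _ h) (within_edge _).
have E : [exists x0 in S1, ((y != x0) && (par x0 y == par x y))
                          || ((par x y != x0) && (par x0 (par x y) == y))].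
  by apply/existsP; exists x; rewrite hx ne eqxx.
by rewrite /Hadj ha E /= !orbT.
Qed.

Theorem lemma6 (T : finType) (adj : rel T)
  (adj_sym : symmetric adj) (adj_irr : irreflexive adj)
  (adj_conn : forall u v : T, connect adj u v)
  (pi : T -> T -> seq T) (Hpi : shortest_paths adj pi)
  (par : T -> T -> T) (Hpar : bfs_parents adj par)
  (chooser : {set T} -> T -> T)
  (Hchooser : forall (S : {set T}) (v : T),
     Gamma adj v :&: S != set0 -> chooser S v \in Gamma adj v :&: S)
  (Psol : T -> T -> seq T)
  (HPsol : forall x1 : T, weak_csssp adj pi (gpar T) x1 (Psol x1))
  (s t : T)
  (Hheavy : (INR (count (heavy adj) (s :: pi s t))
               > INR (mu #|T|) ^ 3 / INR #|T|)) :
  (\big[Rplus/R0]_(S1 : {set T})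
     \big[Rplus/R0]_(S2 : {set T} |
        (uncovered adj (Hadj adj par chooser Psol S1 S2) s
         && uncovered adj (Hadj adj par chooser Psol S1 S2) t)
        ==> within (Hadj adj par chooser Psol S1 S2) (gdist adj s t + 4)%N s t)
       (weight (p1 T) S1 * weight (p2 T) S2)
   >= 1 - / INR #|T| ^ 3).
Proof.
have n1 : (0 < #|T|)%N by apply/card_gt0P; exists s.
set ps := pi s t.
have [/andP [hp /eqP hl] hsz] := Hpi s t; rewrite -/ps in hp hl hsz Hheavy.
have hd : size ps = gdist adj s (last s ps) by rewrite hl.
set Hv := [set v | (v \in s :: ps) && heavy adj v].
set U := \bigcup_(v in Hv) Gamma adj v.
have hkm := count_bound adj_sym hp hd; rewrite -/Hv -/U in hkm.
have N0 : 0 < INR #|T| by apply: lt_0_INR; apply/ltP.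
have hp1 : 0 <= p1 T <= 1.
  rewrite /p1; split; last exact: Rmin_l.
  apply: Rmin_glb; first lra.
  apply: Rmult_le_pos; [have := pos_INR (mu #|T|); lra | left; exact: Rinv_0_lt_compat].
have hp2 : 0 <= p2 T <= 1.
  rewrite /p2; split; last exact: Rmin_l.
  apply: Rmin_glb; first lra.
  case: (Req_dec (INR (mu #|T|)) 0) => [->|ne]; first by rewrite Rinv_0; lra.
  left; apply: Rinv_0_lt_compat; have := pos_INR (mu #|T|); lra.
have HU : forall S1 S2 : {set T}, ~~ [disjoint S1 & U] ->
   (uncovered adj (Hadj adj par chooser Psol S1 S2) s
         && uncovered adj (Hadj adj par chooser Psol S1 S2) t)
        ==> within (Hadj adj par chooser Psol S1 S2) (gdist adj s t + 4)%N s t.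
  move=> S1 S2 nd; apply/implyP => _.
  case/pred0Pn: nd => x /andP [xS1 xU].
  case/bigcupP: xU => v; rewrite inE => /andP [vL _] xv.
  set i := index v (s :: ps).
  have hi : (i <= size ps)%N by rewrite -ltnS; have := vL; rewrite -index_mem.
  have w1 := prefix_within hp hi; rewrite nth_index // in w1.
  have w2 := suffix_within hp hi; rewrite nth_index // hl in w2.
  have wx := within_Gamma xv.
  have g1 := gdist_le (within_cat (within_sym adj_sym wx) (within_sym adj_sym w1)).
  have g2 := gdist_le (within_cat (within_sym adj_sym wx) w2).
  have b1 := within_mono g1 (bfs_within chooser Psol S2 Hpar xS1 s).
  have b2 := within_mono g2 (bfs_within chooser Psol S2 Hpar xS1 t).
  have := within_cat (within_sym (Hadj_sym adj_sym par chooser Psol S1 S2) b1) b2.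
  apply: within_mono; rewrite -hsz; lia.
have := @sum_lb T (fun S1 S2 => (uncovered adj (Hadj adj par chooser Psol S1 S2) s
         && uncovered adj (Hadj adj par chooser Psol S1 S2) t)
        ==> within (Hadj adj par chooser Psol S1 S2) (gdist adj s t + 4)%N s t) U (p1 T) (p2 T) hp1 hp2 HU.
have tb := tail_bound n1 Hheavy hkm.
rewrite /p1 in tb *.
lra.
Qed.
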